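(* Let $G$ be a finite $p$-group, $k=\mathbb F_p$, and $N$ a normal subgroup of $G$. (1) If $\gamma_i^G(N)\subseteq {\mathrm D}_i(N)$ for every $i\ge2$, then $\mathcal J^n(N,G)=\mathcal I(N)^n\mathcal I(G)$ for every $n\ge1$. (2) If $[G,N]\subseteq N^p$, then $\gamma_i^G(N)\subseteq{\mathrm D}_i(N)$ for every $i\ge2$.
   Context: $\mathcal I(X)$ is the augmentation ideal of $kX$, viewed inside $kG$. $\mathcal J^1(N,G)=\mathcal I(N)\mathcal I(G)$, $\mathcal J^{n+1}(N,G)=\mathcal I(N)\mathcal J^n(N,G)+\mathcal J^n(N,G)\mathcal I(N)$. $\gamma_1^G(N)=G$, $\gamma_{n+1}^G(N)=[\gamma_n^G(N),N]$. ${\mathrm D}_i(N)=\prod_{jp^l\ge i}\gamma_j(N)^{p^l}$ is the $i$-th Jennings subgroup of $N$, and $N^p=\langle x^p:x\in N\rangle$. *)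

(* Defs.v *)
From HB Require Import structures.
From mathcomp Require Import all_boot all_order all_algebra all_fingroup all_solvable.
From Stdlib Require Import ClassicalEpsilon.
Set Implicit Arguments. Unset Strict Implicit. Unset Printing Implicit Defensive.
Import GRing.Theory.

Definition asb (P : Prop) : bool :=
  if excluded_middle_informative P then true else false.

Section GroupAlgebra.
Variables (p : nat) (gT : finGroupType).

(* The group algebra k[gT], k = F_p, as the F_p-vector space of functions
   gT -> F_p, with the convolution product.  For a subgroup G of gT, kG is the
   subalgebra of functions supported on G; all ideals below live inside it. *)
Definition kalg := {ffun gT -> GRing.regular 'F_p}.

Local Open Scope ring_scope.

Definition gelt (x : gT) : kalg := [ffun y => (y == x)%:R].

Definition gmul (f g : kalg) : kalg :=
  [ffun z => \sum_(x : gT) f x * g ((x^-1 * z)%g)].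

Definition vprod (U V : {vspace kalg}) : {vspace kalg} :=
  <<[seq gmul u v | u <- enum [pred u : kalg | u \in U],
                    v <- enum [pred v : kalg | v \in V]]>>%VS.

Definition augI (X : {set gT}) : {vspace kalg} :=
  <<[seq gelt x - gelt 1%g | x <- enum X]>>%VS.

Fixpoint vpow (U : {vspace kalg}) (n : nat) : {vspace kalg} :=
  match n with
  | 0 => <<[:: gelt 1%g]>>%VS
  | n'.+1 => vprod U (vpow U n')
  end.

Fixpoint relJ (N G : {set gT}) (n : nat) : {vspace kalg} :=
  match n with
  | 0 | 1 => vprod (augI N) (augI G)
  | n'.+1 => (vprod (augI N) (relJ N G n') + vprod (relJ N G n') (augI N))%VS
  end.

End GroupAlgebra.

Arguments gelt p {gT} x.
Arguments gmul {p gT} f g.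
Arguments vprod {p gT} U V.
Arguments augI p {gT} X.
Arguments vpow {p gT} U n.
Arguments relJ p {gT} N G n.

Section Groups.
Variable gT : finGroupType.
Local Open Scope group_scope.

Fixpoint relgamma (G N : {set gT}) (n : nat) : {set gT} :=
  match n with
  | 0 | 1 => G
  | n'.+1 => [~: relgamma G N n', N]
  end.

Definition powgrp (H : {set gT}) (m : nat) : {set gT} := <<[set x ^+ m | x in H]>>.

(* Jennings subgroup D_i(N) = prod_{j >= 1, l >= 0, j p^l >= i} gamma_j(N)^{p^l},
   i.e. the subgroup generated by all these subgroups (gamma_j = 'L_j). *)
Definition jennings (p : nat) (N : {set gT}) (i : nat) : {set gT} :=
  <<[set x | asb (exists j l : nat,
                   [/\ 1 <= j, i <= j * p ^ l & x \in powgrp 'L_j(N) (p ^ l)])]>>.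

End Groups.

(* Main.v *)
Require Import Defs.
From mathcomp Require Import all_boot all_order all_algebra all_fingroup all_solvable.
From Stdlib Require Import ClassicalEpsilon.
From mathcomp Require Import zify ring.
Set Implicit Arguments. Unset Strict Implicit. Unset Printing Implicit Defensive.

Module GP.
Local Open Scope group_scope.

Section G2.
Variable gT : finGroupType.
Implicit Types (A B S : {set gT}) (C K N : {group gT}).

Lemma comm_subP A B C :
  (forall a b, a \in A -> b \in B -> [~ a, b] \in C) -> [~: A, B] \subset C.
Proof. by move=> H; rewrite gen_subG; apply/subsetP=> _ /imset2P[a b Ha Hb ->]; exact: H. Qed.

Lemma gen_comm_sub S N C : S \subset N -> N \subset 'N(C) ->
  (forall s n, s \in S -> n \in N -> [~ s, n] \in C) -> [~: <<S>>, N] \subset C.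
Proof.
move=> sSN nCN H.
have nSC : <<S>> \subset 'N(C) by rewrite gen_subG (subset_trans sSN).
rewrite -sub_astabQR // gen_subG sub_astabQR ?(subset_trans sSN) //.
exact: comm_subP.
Qed.

Lemma powM_mod K x c n : x \in 'N(K) -> c \in 'N(K) -> [~ c, x] \in K ->
  (c ^+ n)^-1 * (x ^+ n)^-1 * (x * c) ^+ n \in K.
Proof.
move=> nx nc cx; apply: coset_idr; first by rewrite !(groupM, groupV, groupX).
have cm : commute (coset K x) (coset K c).
  rewrite /commute; symmetry; apply/commgP; rewrite -morphR //; apply/eqP; exact: coset_id.
rewrite !morphM ?morphV ?morphX ?groupM ?groupV ?groupX //.
  by rewrite morphM // expgMn // -mulgA mulKg mulVg.
exact: groupM.
Qed.

Lemma commXg_mod K a y n : a \in 'N(K) -> [~ a, y] \in 'N(K) -> [~ [~ a, y], a] \in K ->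
  [~ a ^+ n, y] \in [~ a, y] ^+ n *: K.
Proof.
move=> na nc cK.
have := powM_mod n na nc cK.
have ->: a * [~ a, y] = a ^ y by rewrite commgEl mulKVg.
rewrite -conjXg -mulgA -commgEl => H.
apply/lcosetP; exists (([~ a, y] ^+ n)^-1 * [~ a ^+ n, y]) => //.
by rewrite mulKVg.
Qed.

Section Part2.
Variables (p : nat) (N : {group gT}).
Hypothesis pr : prime p.

Definition Fk k := <<powgrp 'L_k(N) p :|: 'L_k.+1(N)>>.

Lemma powgrp_sub (H : {group gT}) m : powgrp H m \subset H.
Proof. by rewrite gen_subG; apply/subsetP=> _ /imsetP[x Hx ->]; rewrite groupX. Qed.

Lemma powgrp_norm (H : {group gT}) m : H <| N -> N \subset 'N(powgrp H m).
Proof.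
move=> /andP[_ nHN]; apply: norms_gen; apply/subsetP=> n Hn; rewrite inE.
apply/subsetP=> _ /imsetP[_ /imsetP[x Hx ->] ->].
apply/imsetP; exists (x ^ n); last by rewrite conjXg.
by rewrite memJ_norm // (subsetP nHN).
Qed.

Lemma Fk_norm k : N \subset 'N(Fk k).
Proof.
apply: norms_gen; apply: normsU; first exact: powgrp_norm (lcn_normal _ _).
by case/andP: (lcn_normal k.+1 N).
Qed.

Lemma Fk_sub k : Fk k \subset N.
Proof.
rewrite gen_subG subUset lcn_sub andbT.
exact: subset_trans (powgrp_sub _ _) (lcn_sub _ _).
Qed.

Lemma Fk_comm k : [~: Fk k, N] \subset Fk k.+1.
Proof.
have nF : N \subset 'N(Fk k.+1) by exact: Fk_norm.
have L2F : 'L_k.+2(N) \subset Fk k.+1 by exact: subset_trans (subsetUr _ _) (sub_gen _).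
have P1 : [~: powgrp 'L_k(N) p, N] \subset Fk k.+1.
  apply: gen_comm_sub => //.
    apply/subsetP=> _ /imsetP[x Hx ->]; rewrite groupX //.
    exact: (subsetP (lcn_sub k N)) x Hx.
  move=> _ n /imsetP[a Ha ->] Hn.
  have aN : a \in N by exact: (subsetP (lcn_sub k N)) a Ha.
  have nK : N \subset 'N('L_k.+2(N)) by case/andP: (lcn_normal k.+2 N).
  have cL : [~ a, n] \in 'L_k.+1(N) by exact: (subsetP (lcnSnS _ _)) (mem_commg Ha Hn).
  have cN : [~ a, n] \in N by exact: (subsetP (lcn_sub k.+1 N)) _ cL.
  have := commXg_mod p (subsetP nK _ aN) (subsetP nK _ cN).
  case/(_ _)/lcosetP.
    exact: (subsetP (lcnSnS _ _)) (mem_commg cL aN).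
  move=> z Hz ->; rewrite groupM //; last exact: (subsetP L2F).
  apply: mem_gen; rewrite inE; apply/orP; left; apply: mem_gen.
  by apply/imsetP; exists [~ a, n].
apply: gen_comm_sub => //.
  by rewrite subUset lcn_sub andbT (subset_trans (powgrp_sub _ _) (lcn_sub _ _)).
move=> s n /setUP[Hs|Hs] Hn.
  exact: (subsetP P1) (mem_commg Hs Hn).
apply: (subsetP L2F); exact: (subsetP (lcnSnS _ _)) (mem_commg Hs Hn).
Qed.


Lemma jen_mem k j l x : 1 <= j -> k <= j * p ^ l -> x \in powgrp 'L_j(N) (p ^ l) ->
  x \in jennings p N k.
Proof.
move=> j1 kl Hx; apply: mem_gen; rewrite inE /asb.
case: excluded_middle_informative => // [[]]; by exists j, l.
Qed.

Lemma Fk_jen k : 0 < k -> Fk k \subset jennings p N k.+1.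
Proof.
move=> k0; rewrite gen_subG subUset; apply/andP; split; apply/subsetP=> x Hx.
  apply: (@jen_mem k.+1 k 1) => //.
  rewrite expn1; have p2 := prime_gt1 pr; nia.
apply: (@jen_mem k.+1 k.+1 0) => //; first by rewrite expn0 muln1.
by apply: mem_gen; apply/imsetP; exists x; rewrite ?expn0 ?expg1.
Qed.

Lemma part2 (G : {group gT}) : [~: G, N] \subset powgrp N p ->
  forall i, 2 <= i -> relgamma G N i \subset jennings p N i.
Proof.
move=> hyp i; case: i => // [] [] // k _.
suff: relgamma G N k.+2 \subset Fk k.+1 by move/subset_trans; apply; exact: Fk_jen.
elim: k => [|k IH].
  apply: subset_trans hyp _; rewrite /Fk lcn1.
  exact: subset_trans (subsetUl _ _) (sub_gen _).
have -> : relgamma G N k.+3 = [~: relgamma G N k.+2, N] by [].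
exact: subset_trans (commSg _ IH) (Fk_comm _).
Qed.

End Part2.
End G2.
End GP.
Import GP.

Import GRing.Theory.
Section Alg.
Variables (p : nat) (gT : finGroupType).
Local Open Scope ring_scope.
Local Notation kalg := (kalg p gT).
Implicit Types (f g h : kalg).

Lemma gmulDl f1 f2 g : gmul (f1 + f2) g = gmul f1 g + gmul f2 g.
Proof. by apply/ffunP=> z; rewrite !ffunE -big_split; apply: eq_bigr=> x _; rewrite !ffunE mulrDl. Qed.
Lemma gmulDr f g1 g2 : gmul f (g1 + g2) = gmul f g1 + gmul f g2.
Proof. by apply/ffunP=> z; rewrite !ffunE -big_split; apply: eq_bigr=> x _; rewrite !ffunE mulrDr. Qed.
Lemma gmulZl c f g : gmul (c *: f) g = c *: gmul f g.
Proof. by apply/ffunP=> z; rewrite !ffunE scaler_sumr; apply: eq_bigr=> x _; rewrite ffunE -scalerAl. Qed.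
Lemma gmulZr c f g : gmul f (c *: g) = c *: gmul f g.
Proof.
by apply/ffunP=> z; rewrite !ffunE scaler_sumr; apply: eq_bigr=> x _; rewrite ffunE -scalerAr.
Qed.
Lemma gmul0l g : gmul 0 g = 0.
Proof. by apply/ffunP=> z; rewrite !ffunE big1 // => x _; rewrite ffunE mul0r. Qed.
Lemma gmul0r f : gmul f 0 = 0.
Proof. by apply/ffunP=> z; rewrite !ffunE big1 // => x _; rewrite ffunE mulr0. Qed.
Lemma gmulNl f g : gmul (- f) g = - gmul f g.
Proof. by rewrite -scaleN1r gmulZl scaleN1r. Qed.
Lemma gmulNr f g : gmul f (- g) = - gmul f g.
Proof. by rewrite -scaleN1r gmulZr scaleN1r. Qed.
Lemma gmulBl f1 f2 g : gmul (f1 - f2) g = gmul f1 g - gmul f2 g.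
Proof. by rewrite gmulDl gmulNl. Qed.
Lemma gmulBr f g1 g2 : gmul f (g1 - g2) = gmul f g1 - gmul f g2.
Proof. by rewrite gmulDr gmulNr. Qed.
Lemma gmul_suml I (r : seq I) (P : pred I) (F : I -> kalg) g :
  gmul (\sum_(i <- r | P i) F i) g = \sum_(i <- r | P i) gmul (F i) g.
Proof. exact: (big_morph (fun f => gmul f g) (fun a b => gmulDl a b g) (gmul0l g)). Qed.
Lemma gmul_sumr I (r : seq I) (P : pred I) (F : I -> kalg) f :
  gmul f (\sum_(i <- r | P i) F i) = \sum_(i <- r | P i) gmul f (F i).
Proof. exact: (big_morph (fun g => gmul f g) (fun a b => gmulDr f a b) (gmul0r f)). Qed.

Lemma gelt_mul (a b : gT) : gmul (gelt p a) (gelt p b) = gelt p (a * b)%g.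
Proof.
apply/ffunP=> z; rewrite !ffunE (bigD1 a) //= big1 => [|x /negbTE xa]; last first.
  by rewrite !ffunE xa mul0r.
rewrite !ffunE eqxx mul1r addr0.
have -> : ((a^-1 * z)%g == b) = (z == (a * b)%g) by rewrite -(inj_eq (mulgI a)) mulKVg.
by [].
Qed.

Lemma gmulA f g h : gmul (gmul f g) h = gmul f (gmul g h).
Proof.
apply/ffunP=> z; rewrite !ffunE.
under eq_bigr do rewrite ffunE mulr_suml.
rewrite exchange_big /=; apply: eq_bigr=> y _.
rewrite ffunE mulr_sumr (reindex_inj (mulgI y)) /=; apply: eq_bigr=> w _.
by rewrite mulKg invMg mulgA mulrA.
Qed.

Lemma gmul1r f : gmul f (gelt p 1%g) = f.
Proof.
apply/ffunP=> z; rewrite !ffunE (bigD1 z) //= big1 => [|x /negbTE xz]; last first.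
  rewrite !ffunE; case: eqP => [/(canRL (mulKVg x)) | _]; last by rewrite mulr0.
  by rewrite mulg1 => E; rewrite E eqxx in xz.
by rewrite !ffunE mulVg eqxx mulr1 addr0.
Qed.

Lemma gmul1l f : gmul (gelt p 1%g) f = f.
Proof.
apply/ffunP=> z; rewrite !ffunE (bigD1 1%g) //= big1 => [|x /negbTE xz]; last first.
  by rewrite !ffunE xz mul0r.
by rewrite !ffunE eqxx mul1r invg1 mul1g addr0.
Qed.


Implicit Types (U V W : {vspace kalg}).

Lemma gmul_spanl (s : seq kalg) u v W :
  u \in <<s>>%VS -> (forall a, a \in s -> gmul a v \in W) -> gmul u v \in W.
Proof.
move=> Hu H; have E := (@coord_span _ _ _ (in_tuple s) u Hu).
rewrite {1}E gmul_suml; apply: memv_suml=> i _; rewrite gmulZl; apply: memvZ.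
by apply: H; apply: mem_nth; exact: ltn_ord.
Qed.

Lemma gmul_spanr (s : seq kalg) u v W :
  v \in <<s>>%VS -> (forall b, b \in s -> gmul u b \in W) -> gmul u v \in W.
Proof.
move=> Hv H; have E := (@coord_span _ _ _ (in_tuple s) v Hv).
rewrite {1}E gmul_sumr; apply: memv_suml=> i _; rewrite gmulZr; apply: memvZ.
by apply: H; apply: mem_nth; exact: ltn_ord.
Qed.

Lemma vprod_mem U V u v : u \in U -> v \in V -> gmul u v \in vprod U V.
Proof.
move=> Hu Hv; apply: memv_span; apply/allpairsP; exists (u, v).
by rewrite !mem_enum.
Qed.

Lemma vprod_sub U V W : (forall u v, u \in U -> v \in V -> gmul u v \in W) ->
  (vprod U V <= W)%VS.
Proof.
move=> H; apply/span_subvP=> _ /allpairsP[[u v] [Hu Hv ->]].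
by apply: H; [move: Hu | move: Hv]; rewrite mem_enum.
Qed.

Lemma vprodS U1 U2 V1 V2 : (U1 <= U2)%VS -> (V1 <= V2)%VS ->
  (vprod U1 V1 <= vprod U2 V2)%VS.
Proof.
move=> /subvP sU /subvP sV; apply: vprod_sub=> u v Hu Hv.
by apply: vprod_mem; [apply: sU | apply: sV].
Qed.

Lemma vprod_gen (s t : seq kalg) W :
  (forall a b, a \in s -> b \in t -> gmul a b \in W) -> (vprod <<s>> <<t>> <= W)%VS.
Proof.
move=> H; apply: vprod_sub=> u v Hu Hv.
apply: (gmul_spanl Hu) => a Ha; apply: (gmul_spanr Hv) => b Hb; exact: H.
Qed.

Lemma vprodA U V W : vprod (vprod U V) W = vprod U (vprod V W).
Proof.
apply/eqP; rewrite eqEsubv; apply/andP; split; apply: vprod_sub=> x y Hx Hy.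
  apply: (gmul_spanl Hx) => _ /allpairsP[[u v] [Hu Hv ->]].
  rewrite mem_enum in Hu; rewrite mem_enum in Hv.
  rewrite gmulA; apply: vprod_mem; first exact: Hu.
  by apply: vprod_mem; [exact: Hv | exact: Hy].
apply: (gmul_spanr Hy) => _ /allpairsP[[v w] [Hv Hw ->]].
rewrite mem_enum in Hv; rewrite mem_enum in Hw.
rewrite -gmulA; apply: vprod_mem; last exact: Hw.
by apply: vprod_mem; [exact: Hx | exact: Hv].
Qed.

Lemma vprod1r U : vprod U <<[:: gelt p 1%g]>>%VS = U.
Proof.
apply/eqP; rewrite eqEsubv; apply/andP; split.
  apply: vprod_sub=> u v Hu Hv; apply: (gmul_spanr Hv) => b.
  by rewrite inE => /eqP ->; rewrite gmul1r.
apply/subvP=> u Hu; rewrite -[u]gmul1r; apply: vprod_mem=> //.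
by apply: memv_span; rewrite inE.
Qed.

Lemma vprod1l U : vprod <<[:: gelt p 1%g]>>%VS U = U.
Proof.
apply/eqP; rewrite eqEsubv; apply/andP; split.
  apply: vprod_sub=> u v Hu Hv; apply: (gmul_spanl Hu) => b.
  by rewrite inE => /eqP ->; rewrite gmul1l.
apply/subvP=> u Hu; rewrite -[u]gmul1l; apply: vprod_mem=> //.
by apply: memv_span; rewrite inE.
Qed.

Lemma vprodDr U V W : (vprod U (V + W) <= vprod U V + vprod U W)%VS.
Proof.
apply: vprod_sub=> u x Hu /memv_addP[v Hv [w Hw ->]].
by rewrite gmulDr memv_add // vprod_mem.
Qed.

Lemma vpow_comm U n : vprod (vpow U n) U = vpow U n.+1.
Proof.
elim: n => [|n IH] /=; first by rewrite vprod1l vprod1r.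
by rewrite vprodA IH.
Qed.

End Alg.

Section Main1.
Variables (p : nat) (gT : finGroupType) (N G : {group gT}).
Hypothesis pr : prime p.
Local Open Scope ring_scope.
Local Notation kalg := (kalg p gT).
Local Notation I := (augI p N).
Local Notation A := (augI p G).
Local Notation e x := (@gelt p gT x).

Lemma mem_augI (X : {set gT}) x : x \in X -> e x - e 1%g \in augI p X.
Proof. by move=> Hx; apply: memv_span; apply/mapP; exists x; rewrite ?mem_enum. Qed.

Lemma augIS (X Y : {set gT}) : X \subset Y -> (augI p X <= augI p Y)%VS.
Proof.
move=> sXY; apply/span_subvP=> _ /mapP[x Hx ->]; apply: mem_augI.
by rewrite mem_enum in Hx; exact: (subsetP sXY).
Qed.

Lemma gmul11 x y : gmul (e x - e 1%g) (e y - e 1%g) =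
  (e (x * y)%g - e 1%g) - (e x - e 1%g) - (e y - e 1%g).
Proof.
rewrite gmulBl !gmulBr !gelt_mul mulg1 mul1g mulg1.
by apply/ffunP=> z; rewrite !ffunE; ring.
Qed.

Lemma augI_mul (H : {group gT}) : (vprod (augI p H) (augI p H) <= augI p H)%VS.
Proof.
apply: vprod_gen=> _ _ /mapP[x Hx ->] /mapP[y Hy ->].
rewrite mem_enum in Hx; rewrite mem_enum in Hy.
by rewrite gmul11; apply: memvB; first apply: memvB; apply: mem_augI; rewrite ?groupM.
Qed.

Local Notation Q := (vprod I I).

Lemma QsubI : (Q <= I)%VS. Proof. exact: augI_mul. Qed.

Lemma Q_mull x q : x \in N -> q \in Q -> gmul (e x) q \in Q.
Proof.
move=> Hx Hq; rewrite -[e x](subrK (e 1%g)) gmulDl gmul1l memvD //.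
by apply: vprod_mem; [exact: mem_augI | exact: (subvP QsubI)].
Qed.

Definition Sset := [set y in N | e y - e 1%g \in Q].

Lemma S_group : group_set Sset.
Proof.
apply/group_setP; split; first by rewrite inE group1 subrr mem0v.
move=> x y; rewrite !inE => /andP[Nx Qx] /andP[Ny Qy]; rewrite groupM //=.
have -> : e (x * y)%g - e 1%g =
  gmul (e x - e 1%g) (e y - e 1%g) + (e x - e 1%g) + (e y - e 1%g).
  by rewrite gmul11; apply/ffunP=> z; rewrite !ffunE; ring.
apply: memvD => //; apply: memvD => //; apply: vprod_mem; exact: (subvP QsubI).
Qed.

Canonical Sg := Group S_group.

Lemma comm_S a b : a \in N -> b \in N -> [~ a, b]%g \in Sset.
Proof.
move=> Na Nb; rewrite inE groupR //=.
have -> : e [~ a, b]%g - e 1%g = gmul (e (b * a)^-1%g)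
   (gmul (e a - e 1%g) (e b - e 1%g) - gmul (e b - e 1%g) (e a - e 1%g)).
  have -> : gmul (e a - e 1%g) (e b - e 1%g) - gmul (e b - e 1%g) (e a - e 1%g)
      = e (a * b)%g - e (b * a)%g.
    by rewrite !gmul11; apply/ffunP=> z; rewrite !ffunE; ring.
  rewrite gmulBr !gelt_mul mulVg; congr (e _ - _).
  by rewrite /commg /conjg invMg !mulgA.
apply: Q_mull; first by rewrite groupV groupM.
by apply: memvB; apply: vprod_mem; apply: mem_augI.
Qed.

Lemma L2_S : 'L_2(N)%g \subset Sset.
Proof. by rewrite lcn2 -[Sset]/(gval Sg); apply: comm_subP=> a b; exact: comm_S. Qed.

Lemma pow_S y : y \in N -> (y ^+ p)%g \in Sset.
Proof.
move=> Ny; rewrite inE groupX //=.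
have -> : e (y ^+ p)%g - e 1%g =
    gmul (e y - e 1%g) (\sum_(0 <= r < p) (e (y ^+ r)%g - e 1%g)).
  rewrite gmul_sumr.
  have E r : gmul (e y - e 1%g) (e (y ^+ r)%g - e 1%g) =
     (e (y ^+ r.+1)%g - e (y ^+ r)%g) + (e 1%g - e y).
    by rewrite gmul11 expgS; apply/ffunP=> z; rewrite !ffunE; ring.
  under eq_bigr do rewrite E.
  rewrite big_split /= telescope_sumr // sumr_const_nat subn0 expg0.
  by rewrite -scaler_nat pchar_Fp_0 // scale0r addr0.
apply: vprod_mem; first exact: mem_augI.
by apply: memv_suml=> r _; rewrite mem_augI // groupX.
Qed.

Lemma jen2_S : jennings p N 2 \subset Sset.
Proof.
rewrite -[Sset]/(gval Sg) gen_subG; apply/subsetP=> x; rewrite inE /asb.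
case: excluded_middle_informative => // [[j [l [j1 jl Hx]]]] _.
move: x Hx; apply/subsetP; rewrite gen_subG; apply/subsetP=> _ /imsetP[y Hy ->].
case: j j1 jl Hy => // [] [|j] _ jl Hy.
  case: l jl => [|l] jl; first by rewrite expn0 in jl.
  rewrite expnSr expgM; apply: pow_S; rewrite groupX //.
apply: (subsetP L2_S); rewrite groupX //.
exact: (subsetP (lcn_sub_leq N (isT : (2 <= j.+2)%N))).
Qed.

Lemma KA : (N <| G)%g -> ([~: G, N] \subset jennings p N 2)%g ->
  (vprod A I <= vprod I A + Q)%VS.
Proof.
move=> /andP[sNG nNG] hyp.
apply: vprod_gen=> _ _ /mapP[g Hg ->] /mapP[x Hx ->].
rewrite mem_enum in Hg; rewrite mem_enum in Hx.
have Hgi : (g^-1 \in G)%g by rewrite groupV.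
have E1 : (x ^ g^-1 * g = g * x)%g.
  by rewrite conjgE invgK -mulgA mulgKV.
have E2 : (x * [~ x, g^-1] = x ^ g^-1)%g by rewrite commgEl mulKVg.
have -> : gmul (e g - e 1%g) (e x - e 1%g) =
   gmul (e (x ^ g^-1)%g - e 1%g) (e g - e 1%g) + gmul (e x) (e [~ x, g^-1]%g - e 1%g).
  rewrite !gmul11 gmulBr !gelt_mul E1 E2 mulg1.
  by apply/ffunP=> z; rewrite !ffunE; ring.
apply: memv_add.
  apply: vprod_mem; apply: mem_augI => //.
  by rewrite memJ_norm // (subsetP nNG).
apply: Q_mull => //.
have : ([~ x, g^-1] \in Sset)%g.
  apply: (subsetP jen2_S); apply: (subsetP hyp).
  by rewrite commGC; apply: mem_commg.
by rewrite inE => /andP[].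
Qed.

Lemma part1 : (N <| G)%g ->
  (forall i : nat, (2 <= i)%N -> relgamma G N i \subset jennings p N i) ->
  forall n : nat, (1 <= n)%N -> relJ p N G n = vprod (vpow I n) A.
Proof.
move=> nNG hyp n; case: n => // n _.
have sIA : (I <= A)%VS by apply: augIS; case/andP: nNG.
have KA' := KA nNG (hyp 2 isT).
elim: n => [|n IH]; first by rewrite /= vprod1r.
have -> : relJ p N G n.+2 = (vprod I (relJ p N G n.+1) + vprod (relJ p N G n.+1) I)%VS by [].
rewrite IH.
have -> : vpow I n.+2 = vprod I (vpow I n.+1) by [].
rewrite [in RHS]vprodA; apply/addv_idPl.
set P := vpow I n.+1.
rewrite vprodA.
apply: subv_trans (vprodS (subvv P) KA') _.
apply: subv_trans (vprodDr _ _ _) _.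
rewrite subv_add; apply/andP; split.
  by rewrite -vprodA vpow_comm -vprodA.
rewrite -vprodA vpow_comm.
have -> : vpow I n.+2 = vprod I P by [].
rewrite vprodA; exact: vprodS (subvv _) (vprodS (subvv P) sIA).
Qed.

End Main1.

Theorem mainTheorem9 (p : nat) (gT : finGroupType) (G N : {group gT}) :
  prime p -> (p.-group G)%g -> (N <| G)%g ->
  ((forall i : nat, 2 <= i -> relgamma G N i \subset jennings p N i) ->
     forall n : nat, 1 <= n ->
       relJ p N G n = vprod (vpow (augI p N) n) (augI p G))
  /\
  (([~: G, N] \subset powgrp N p)%g ->
     forall i : nat, 2 <= i -> relgamma G N i \subset jennings p N i).
Proof.
move=> pr _ nNG; split; first exact: part1.
exact: part2.
Qed.
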